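(* For every positive integer $q$, the simplicial complex $\mathbb{M}_q^2$, with vertex $\ell_{i,j}$ labeled by $\tau_i\tau_j$, supports the minimal free resolution of $\mathcal{T}_q^{\,2}$, where $\mathcal{T}_q$ is the permutation ideal.
   Context: $S_q$ is the symmetric group on $[q]$; for $\sigma=i_1\cdots i_q$ in one-line notation, $\sigma(j)=i_j$. $K$ is a field, $S_{\mathcal{T}}=K[x_\sigma:\sigma\in S_q]$, $\tau_i=\prod_{\sigma\in S_q}x_\sigma^{\sigma(i)}$, $\mathcal{T}_q=(\tau_1,\ldots,\tau_q)$. $\mathbb{M}_q^2$: vertex set $\{\ell_{i,j}:1\le i\le j\le q\}$, $\mathcal{M}=\{\ell_{i,j}:i<j\}$, facets $\mathcal{M}_k=\mathcal{M}\cup\{\ell_{k,k}\}$, $k\in[q]$. A labeled simplicial complex (faces labeled by lcm of vertex labels) supports a free resolution of the ideal generated by its vertex labels if the Bayer–Peeva–Sturmfels homogenization of its augmented simplicial chain complex (free basis element for each face $\tau$ in multidegree $m_\tau$, differential $\tau\mapsto\sum\pm(m_\tau/m_{\tau\setminus v})(\tau\setminus v)$) is exact, i.e. is a free resolution of that ideal. *)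

(* Defs.v *)
From HB Require Import structures.
From mathcomp Require Import all_boot all_order all_algebra all_fingroup.
From mathcomp Require Import mpoly.
Set Implicit Arguments. Unset Strict Implicit. Unset Printing Implicit Defensive.
Import GRing.Theory.
Local Open Scope ring_scope.

Section LabeledComplex.
Variables (K : fieldType) (n : nat) (V : finType).
Variable face : pred {set V}.
Variable lab : V -> 'X_{1..n}.

(* label of a face: lcm of the vertex labels (empty face gets label 1)          *)
Definition face_lab (t : {set V}) : 'X_{1..n} :=
  [multinom (\max_(v in t) lab v i)%N | i < n].

Definition bps_sign (t : {set V}) (v : V) : {mpoly K[n]} :=
  (-1) ^+ #|[set w in t | (enum_rank w < enum_rank v)%N]|.

(* chains of the homogenized augmented chain complex: free module with basis the
   faces; a chain in homological degree k (k = -1,0,1,...) is supported on faces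
   of cardinality k+1                                                         *)
Definition chain := {ffun {set V} -> {mpoly K[n]}}.
Definition supported (k : nat) (c : chain) : Prop :=
  forall t, c t != 0 -> face t /\ #|t| = k.

Definition bps_diff (c : chain) : chain :=
  [ffun s => \sum_(t : {set V} | face t) \sum_(v in t | s == t :\ v)
      bps_sign t v * 'X_[mnm_sub (face_lab t) (face_lab s)] * c t].

(* exactness of the homogenized augmented chain complex at every F_k, k >= 0
   (F_k is spanned by faces of cardinality k+1)                               *)
Definition bps_exact : Prop :=
  forall (k : nat) (c : chain), supported k.+1 c -> bps_diff c = 0 ->
    exists b : chain, supported k.+2 b /\ bps_diff b = c.

(* minimality: every differential maps into m F, m = (x_1,...,x_n) the maximal
   homogeneous ideal, i.e. all coefficients have zero constant term           *)
Definition bps_minimal : Prop :=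
  forall (c : chain) (s : {set V}), (bps_diff c s)@_(@mnm0 n) = 0.

(* the image of the augmentation F_0 -> F_{-1} = S                             *)
Definition bps_augm_image : {mpoly K[n]} -> Prop :=
  fun p => exists c : chain, supported 1 c /\ bps_diff c set0 = p.

End LabeledComplex.

Definition ideal_gen (R : comNzRingType) (I : finType) (g : I -> R) : R -> Prop :=
  fun p => exists c : I -> R, p = \sum_i c i * g i.
Definition ideal_mul (R : comNzRingType) (A B : R -> Prop) : R -> Prop :=
  fun p => exists s : seq (R * R),
    (forall ab, ab \in s -> A ab.1 /\ B ab.2) /\ p = \sum_(ab <- s) ab.1 * ab.2.

(* variables x_sigma, sigma in S_q, indexed through enum_rank                   *)
Definition nvars (q : nat) := #|{perm 'I_q}|.
(* exponent vector of tau_i = prod_sigma x_sigma^{sigma(i)} (1-based values)     *)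
Definition tau_mnm (q : nat) (i : 'I_q) : 'X_{1..nvars q} :=
  [multinom ((enum_val (j : 'I_#|{perm 'I_q}|) : {perm 'I_q}) i).+1 | j < nvars q].
Definition tau (K : fieldType) (q : nat) (i : 'I_q) : {mpoly K[nvars q]} :=
  'X_[tau_mnm i].
Definition perm_ideal (K : fieldType) (q : nat) : {mpoly K[nvars q]} -> Prop :=
  ideal_gen (@tau K q).

(* vertex l_{i,j} is the pair (i,j) with i <= j (0-based indices);
   M = {l_{i,j} : i < j}, facets M_k = M u {l_{k,k}}                            *)
Definition Mset (q : nat) : {set 'I_q * 'I_q} := [set p : 'I_q * 'I_q | (p.1 < p.2)%N].
Definition Mq2_face (q : nat) : pred {set 'I_q * 'I_q} :=
  fun t => [exists k : 'I_q, t \subset Mset q :|: [set (k, k)]].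
Definition Mq2_lab (q : nat) (p : 'I_q * 'I_q) : 'X_{1..nvars q} :=
  mnm_add (tau_mnm p.1) (tau_mnm p.2).

(* Main.v *)
Require Import Defs.
From HB Require Import structures.
From mathcomp Require Import all_boot all_order all_algebra all_fingroup.
From mathcomp Require Import mpoly.
From mathcomp Require Import zify ring.
Set Implicit Arguments. Unset Strict Implicit. Unset Printing Implicit Defensive.
Import GRing.Theory.
Local Open Scope ring_scope.

Section Cone.
Variables (K : fieldType) (V : finType) (face : pred {set V}).

Definition rk (w : V) : nat := enum_rank w.
Definition sgnK (t : {set V}) (v : V) : K :=
  (-1) ^+ #|[set w in t | (rk w < rk v)%N]|.
Definition delK (f : {set V} -> K) (s : {set V}) : K :=
  \sum_(v | (v \notin s) && face (v |: s)) sgnK (v |: s) v * f (v |: s).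
Definition homK (u : V) (f : {set V} -> K) (t : {set V}) : K :=
  if u \in t then sgnK t u * f (t :\ u) else 0.

Lemma card_ltU (x y : V) (B : {set V}) : x \notin B ->
  #|[set w in x |: B | (rk w < rk y)%N]| =
  ((rk x < rk y) + #|[set w in B | (rk w < rk y)%N]|)%N.
Proof.
move=> xB; case Px: (rk x < rk y)%N.
  have -> : [set w in x |: B | (rk w < rk y)%N] = x |: [set w in B | (rk w < rk y)%N].
    by apply/setP=> w; rewrite !inE; case: (eqVneq w x) => [->|] //=; rewrite Px.
  by rewrite cardsU1 inE (negbTE xB).
have -> : [set w in x |: B | (rk w < rk y)%N] = [set w in B | (rk w < rk y)%N].
  by apply/setP=> w; rewrite !inE; case: (eqVneq w x) => [->|] //=; rewrite Px (negbTE xB).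
by [].
Qed.

Lemma sgnK_self (t : {set V}) (v : V) :
  sgnK (v |: t) v = sgnK (t :\ v) v.
Proof.
rewrite /sgnK; congr (_ ^+ _); apply: eq_card => w; rewrite !inE.
by case: (eqVneq w v) => [->|]; rewrite ?ltnn ?andbF.
Qed.

Lemma sgnK_sq (t : {set V}) (v : V) : sgnK t v * sgnK t v = 1.
Proof. by rewrite /sgnK -exprD addnn -mul2n exprM sqrrN !expr1n. Qed.

Lemma sgnK_swap (s : {set V}) (u v : V) : u \in s -> v \notin s ->
  sgnK (v |: s) v * sgnK (v |: s) u = - (sgnK s u * sgnK (v |: (s :\ u)) v).
Proof.
move=> us vs.
have uv : u != v by apply: contraNneq vs => <-.
have uA : u \notin s :\ u by rewrite !inE eqxx.
have vA : v \notin s :\ u by rewrite !inE negb_and vs orbT.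
have vuA : v \notin u |: (s :\ u) by rewrite !inE (negbTE vs) andbF orbF eq_sym.
have uvA : u \notin v |: (s :\ u) by rewrite !inE eqxx (negbTE uv).
have sE : s = u |: (s :\ u) by rewrite (setD1K us).
move: (s :\ u) uA vA vuA uvA sE => A uA vA vuA uvA sE.
rewrite sE /sgnK.
rewrite setUCA ?(card_ltU _ vuA) ?(card_ltU _ uA) ?(card_ltU _ uvA) ?(card_ltU _ vA) ltnn.
have : rk u != rk v by apply: contra uv => /eqP/val_inj/enum_rank_inj ->.
case: (ltngtP (rk u) (rk v)) => // _ _; rewrite !exprD ?expr0 ?expr1; ring.
Qed.

Lemma setD1U1 (s : {set V}) (u v : V) : v != u -> (v |: s) :\ u = v |: (s :\ u).
Proof.
move=> vu; apply/setP=> w; rewrite !inE.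
by case: (eqVneq w v) => [->|] //=; rewrite vu.
Qed.

Lemma cone_id (u : V) (P : pred {set V}) (f : {set V} -> K) :
  (forall t, face t -> P t -> face (u |: t)) ->
  (forall t, f t != 0 -> face t /\ P t) ->
  forall s, delK (homK u f) s + homK u (delK f) s = f s.
Proof.
move=> hc hf s.
rewrite {2}/homK.
case us: (u \in s).
- have E1 : delK (homK u f) s = \sum_(v | v != u)
     (if (v \notin s) && face (v |: s) then sgnK (v |: s) v * homK u f (v |: s) else 0).
    by rewrite /delK big_mkcond (bigD1 u) //= us /= add0r.
  have E2 : delK f (s :\ u) = (if face s then sgnK s u * f s else 0) +
     \sum_(v | v != u) (if (v \notin s :\ u) && face (v |: (s :\ u))
        then sgnK (v |: (s :\ u)) v * f (v |: (s :\ u)) else 0).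
    by rewrite /delK big_mkcond (bigD1 u) //= !inE eqxx /= setD1K.
  rewrite E1 E2 mulrDr addrCA.
  have -> : sgnK s u * (if face s then sgnK s u * f s else 0) = f s.
    case fs: (face s); first by rewrite mulrA sgnK_sq mul1r.
    by case: (eqVneq (f s) 0) => [->|/hf []]; rewrite ?fs ?mulr0.
  rewrite mulr_sumr -big_split /= big1 ?addr0 // => v vu.
  rewrite !inE vu /=.
  case vs: (v \in s) => //=; first by rewrite mulr0 addr0.
  rewrite /homK !inE eq_sym (negbTE vu) us /= setD1U1 //.
  case: (eqVneq (f (v |: (s :\ u))) 0) => [->|g0]; first by rewrite !mulr0 !if_same mulr0 addr0.
  have [fA PA] := hf _ g0.
  have fvs : face (v |: s).
    have -> : v |: s = u |: (v |: (s :\ u)) by rewrite setUCA setD1K.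
    exact: hc.
  rewrite fvs fA mulrA sgnK_swap ?vs //; ring.
- rewrite /= addr0 /delK big_mkcond (bigD1 u) //= big1 ?addr0 => [|v vu].
    rewrite us /=; case: ifP => fus; last first.
      by case: (eqVneq (f s) 0) => // /hf [fs Ps]; rewrite hc in fus.
    by rewrite /homK setU11 mulrA sgnK_sq mul1r setU1K ?us.
  case: ifP => // _; rewrite /homK !inE eq_sym (negbTE vu) us /=; ring.
Qed.

End Cone.

Section Poly.
Variables (K : fieldType) (n : nat) (V : finType) (face : pred {set V}).
Variable lab : V -> 'X_{1..n}.
Local Notation L := (face_lab lab).
Local Notation chainT := (chain K n V).

Lemma L_sub (s t : {set V}) : s \subset t -> (L s <= L t)%MM.
Proof.
move=> st; apply/mnm_lepP => i; rewrite !mnmE.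
apply/bigmax_leqP => v vs; apply: leq_bigmax_cond; exact: (subsetP st).
Qed.

Lemma L_vert (t : {set V}) (v : V) : v \in t -> (lab v <= L t)%MM.
Proof. by move=> vt; apply/mnm_lepP => i; rewrite mnmE; apply: (leq_bigmax_cond (F := fun v => lab v i)). Qed.

Lemma L_leP (t : {set V}) (m : 'X_{1..n}) :
  reflect (forall v, v \in t -> (lab v <= m)%MM) (L t <= m)%MM.
Proof.
apply: (iffP idP) => [h v vt|h].
  exact: lepm_trans (L_vert vt) h.
apply/mnm_lepP => i; rewrite mnmE; apply/bigmax_leqP => v vt.
exact: (mnm_lepP (h v vt) i).
Qed.

Lemma L_set1 (v : V) : L [set v] = lab v.
Proof. by apply/mnmP => i; rewrite mnmE big_set1. Qed.

Lemma L_set0 : L set0 = 0%MM.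
Proof. by apply/mnmP => i; rewrite !mnmE big_set0. Qed.

Lemma coefXM (d e : 'X_{1..n}) (p : {mpoly K[n]}) :
  ('X_[d] * p)@_e = if (d <= e)%MM then p@_(e - d) else 0.
Proof.
case: ifP => h.
  by rewrite mulrC -{1}(submK h) addmC mcoeffMX.
rewrite mulrC memN_msupp_eq0 // (perm_mem (msuppMX p d)).
by apply/mapP => -[m' _ em]; rewrite em lem_addr in h.
Qed.

Lemma sign_coef (t : {set V}) (v : V) (p : {mpoly K[n]}) e :
  (@bps_sign K n V t v * p)@_e = @sgnK K V t v * p@_e.
Proof. by rewrite /bps_sign -(rmorph_sign (@mpolyC n K)) mcoeffCM. Qed.

Lemma mnm_subsub (a b m : 'X_{1..n}) : (b <= a)%MM -> (b <= m)%MM ->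
  ((a - b <= m - b)%MM = (a <= m)%MM).
Proof.
move=> /mnm_lepP ba /mnm_lepP bm.
apply/mnm_lepP/mnm_lepP => h i; move: (h i) (ba i) (bm i); rewrite ?mnmBE; lia.
Qed.

Lemma mnm_subsub2 (a b m : 'X_{1..n}) : (b <= a)%MM -> (b <= m)%MM -> (a <= m)%MM ->
  (m - b - (a - b) = m - a)%MM.
Proof.
move=> /mnm_lepP ba /mnm_lepP bm /mnm_lepP am.
apply/mnmP => i; move: (ba i) (bm i) (am i); rewrite !mnmBE; lia.
Qed.

Lemma sum_faces (R : zmodType) (F : {set V} -> V -> R) (s : {set V}) :
  \sum_(t | face t) \sum_(v in t | s == t :\ v) F t v =
  \sum_(v | (v \notin s) && face (v |: s)) F (v |: s) v.
Proof.
rewrite (exchange_big_dep predT) //= [RHS]big_mkcond /=; apply: eq_bigr => v _.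
case: (boolP (v \in s)) => vs /=.
  apply: big1 => t /andP[_ /andP[vt /eqP st]].
  by move: vs; rewrite st !inE eqxx.
rewrite big_mkcond (bigD1 (v |: s)) //= big1 ?addr0 => [|t tv].
  by rewrite setU11 setU1K // eqxx /= andbT.
case: ifP => // /andP[_ /andP[vt /eqP st]].
by move: tv; rewrite st setD1K // eqxx.
Qed.

Definition gam (c : chainT) (m : 'X_{1..n}) (t : {set V}) : K :=
  if (L t <= m)%MM then (c t)@_(m - L t) else 0.

Lemma gam_diff (c : chainT) m s :
  gam (bps_diff face lab c) m s = delK face (gam c m) s.
Proof.
rewrite /gam ffunE /delK; case: ifP => hs.
  rewrite raddf_sum; under eq_bigr do rewrite raddf_sum.
  rewrite (sum_faces (fun t v => (bps_sign K n t v * 'X_[L t - L s] * c t)@_(m - L s))).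
  apply: eq_bigr => v /andP[vs fv].
  have le1 : (L s <= L (v |: s))%MM by apply: L_sub; apply: subsetUr.
  rewrite -mulrA sign_coef coefXM mnm_subsub //.
  by case: ifP => h; rewrite ?mulr0 // mnm_subsub2.
rewrite big1 // => v _; case: ifP; rewrite ?mulr0 // => h.
have le1 : (L s <= L (v |: s))%MM by apply: L_sub; apply: subsetUr.
by rewrite (lepm_trans le1 h) in hs.
Qed.

Lemma gam_inj (c c' : chainT) :
  (forall m t, gam c m t = gam c' m t) -> c = c'.
Proof.
move=> h; apply/ffunP => t; apply/mpolyP => a.
by have := h (a + L t)%MM t; rewrite /gam lem_addl addmK.
Qed.

Lemma gam0 m t : gam (0 : chainT) m t = 0.
Proof. by rewrite /gam ffunE mcoeff0 if_same. Qed.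

Definition mk (S : seq 'X_{1..n}) (beta : 'X_{1..n} -> {set V} -> K) : chainT :=
  [ffun t => \sum_(m <- S) beta m t *: 'X_[m - L t]].

Lemma gam_mk S beta m t : uniq S ->
  (forall m t, beta m t != 0 -> (m \in S) && (L t <= m)%MM) ->
  gam (mk S beta) m t = beta m t.
Proof.
move=> uS hb; rewrite /gam ffunE.
have key : forall m', m' != m -> (L t <= m)%MM ->
    beta m' t * ((m' - L t)%MM == (m - L t)%MM)%:R = 0.
  move=> m' nm lm; case: (eqVneq (beta m' t) 0) => [->|/hb/andP[_ lm']]; first by rewrite mul0r.
  case: eqP => [e|]; last by rewrite mulr0.
  by move: nm; rewrite -(submK lm') -(submK lm) e eqxx.
case: ifP => lm.
  rewrite raddf_sum /=.
  under eq_bigr do rewrite mcoeffZ mcoeffX.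
  case mS: (m \in S).
    rewrite (bigD1_seq m) //= eqxx mulr1 big1 ?addr0 // => m' nm; exact: key.
  rewrite big1_seq; last by move=> m' /andP[_ m'S]; apply: key => //; apply: contraTneq m'S => ->; rewrite mS.
  by case: (eqVneq (beta m t) 0) => // /hb; rewrite mS.
by case: (eqVneq (beta m t) 0) => // /hb; rewrite lm andbF.
Qed.


Lemma exact_gen :
  (forall m t, face t -> t != set0 -> (L t <= m)%MM ->
     exists u, (lab u <= m)%MM /\
       forall t', face t' -> (L t' <= m)%MM -> face (u |: t')) ->
  bps_exact K face lab.
Proof.
move=> hcone k c supp hd.
pose S := undup (flatten [seq [seq (a + L t)%MM | a <- msupp (c t)] | t <- enum {set V}]).
have uS : uniq S by apply: undup_uniq.
pose beta m := if [pick u | (lab u <= m)%MM &&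
     [forall t : {set V}, (face t && (L t <= m)%MM) ==> face (u |: t)]] is Some u
   then homK u (gam c m) else fun _ => 0.
have gamS : forall m t, gam c m t != 0 ->
    ((m \in S) && (L t <= m)%MM) /\ face t /\ #|t| = k.+1.
  move=> m t; rewrite /gam; case: ifP => [lm nz|]; last by rewrite eqxx.
  split; last by apply: supp; apply: contraNneq nz => ->; rewrite mcoeff0.
  rewrite andbT mem_undup; apply/flattenP.
  exists [seq (a + L t)%MM | a <- msupp (c t)]; first by apply: map_f; rewrite mem_enum.
  by rewrite -(submK lm); apply: map_f; rewrite mcoeff_msupp.
have hb : forall m t, beta m t != 0 -> (m \in S) && (L t <= m)%MM.
  move=> m t; rewrite /beta; case: pickP => [u /andP[lu /forallP hu]|_]; last by rewrite eqxx.
  rewrite /homK; case: ifP => ut; last by rewrite eqxx.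
  case: (eqVneq (gam c m (t :\ u)) 0) => [->|]; first by rewrite mulr0 eqxx.
  move=> /gamS [/andP[mS lt] _] _; rewrite mS /=.
  apply/L_leP => w wt; case: (eqVneq w u) => [->//|wu].
  by apply: (elimT (L_leP _ _) lt); rewrite !inE wu.
exists (mk S beta); split.
- move=> t bt.
  have [a aP] : exists a, (mk S beta t)@_a != 0.
    case E: (msupp (mk S beta t)) => [|a s'].
      by move/eqP: E; rewrite msupp_eq0 (negbTE bt).
    by exists a; rewrite -mcoeff_msupp E inE eqxx.
  move: aP; have := gam_mk (a + L t)%MM t uS hb; rewrite {1}/gam lem_addl addmK => ->.
  rewrite /beta; case: pickP => [u /andP[lu /forallP hu]|_]; last by rewrite eqxx.
  rewrite /homK; case: ifP => ut; last by rewrite eqxx.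
  case: (eqVneq (gam c (a + L t)%MM (t :\ u)) 0) => [->|]; first by rewrite mulr0 eqxx.
  move=> /gamS [/andP[_ lt] [ft ct]] _; split.
    by have := hu (t :\ u); rewrite ft lt /= setD1K.
  by rewrite (cardsD1 u t) ut ct.
- apply: gam_inj => m t; rewrite gam_diff.
  have -> : delK face (gam (mk S beta) m) t = delK face (beta m) t.
    by apply: eq_bigr => v _; rewrite gam_mk.
  rewrite /beta; case: pickP => [u /andP[lu /forallP hu]|none].
    rewrite -(cone_id (face := face) (P := fun t => (L t <= m)%MM) (f := gam c m) (u := u) _ _ t).
    + have -> : homK u (delK face (gam c m)) t = 0.
        by rewrite /homK; case: ifP => // _; rewrite -gam_diff hd gam0 mulr0.
      by rewrite addr0.
    + by move=> t' ft' lt'; have := hu t'; rewrite ft' lt'.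
    + by move=> t' /gamS [/andP[_ l] [f _]].
  rewrite /delK big1 => [|v _]; last by rewrite mulr0.
  case: (eqVneq (gam c m t) 0) => // /gamS [/andP[_ lt] [ft ct]].
  have tn0 : t != set0 by rewrite -card_gt0 ct.
  have [u [lu hu]] := hcone m t ft tn0 lt.
  have hf : [forall t' : {set V}, (face t' && (L t' <= m)%MM) ==> face (u |: t')].
    by apply/forallP => t'; apply/implyP => /andP[]; exact: hu.
  by move: (none u); rewrite lu hf.
Qed.

Lemma minimal_gen :
  (forall t v, face t -> v \in t -> L (t :\ v) != L t) -> bps_minimal K face lab.
Proof.
move=> hm c s; rewrite ffunE raddf_sum big1 // => t ft.
rewrite raddf_sum big1 // => v /andP[vt /eqP st].
change (mcoeff 0%MM (bps_sign K n t v * 'X_[L t - L s] * c t) = 0).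
rewrite -mulrA sign_coef coefXM; case: ifP => [h|]; last by rewrite mulr0.
have le : (L s <= L t)%MM by apply: L_sub; rewrite st subsetDl.
have : L t = L s.
  by apply/mnmP => i; move: (mnm_lepP h i) (mnm_lepP le i); rewrite !mnmBE mnm0E; lia.
by move: (hm t v ft vt); rewrite -st => /eqP ne /esym.
Qed.

Lemma diff_set0 (c : chainT) :
  bps_diff face lab c set0 = \sum_(v | face [set v]) 'X_[lab v] * c [set v].
Proof.
rewrite ffunE (sum_faces (fun t v => bps_sign K n t v * 'X_[L t - L set0] * c t)).
apply: eq_big => [v|v _]; first by rewrite inE setU0.
rewrite setU0 L_set1 L_set0 subm0 /bps_sign.
have -> : #|[set w in [set v] | (enum_rank w < enum_rank v)%N]| = 0%N.
  apply/eqP; rewrite cards_eq0; apply/eqP/setP => w; rewrite !inE.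
  by case: eqP => [->|]; rewrite ?ltnn.
by rewrite expr0 mul1r.
Qed.

End Poly.

Section Mq.
Variable q : nat.
Local Notation V := ('I_q * 'I_q)%type.
Local Notation face := (@Mq2_face q).
Local Notation lab := (@Mq2_lab q).
Local Notation L := (face_lab lab).

Lemma labE (p : V) (s : {perm 'I_q}) :
  lab p (enum_rank s) = ((s p.1).+1 + (s p.2).+1)%N.
Proof. by rewrite /Mq2_lab mnmE /tau_mnm !mnmE enum_rankK. Qed.

Lemma MsetE (w : V) : (w \in @Mset q) = (w.1 < w.2)%N.
Proof. by rewrite inE. Qed.

Lemma faceE (t : {set V}) : face t ->
  exists k : 'I_q, forall w, w \in t -> (w.1 < w.2)%N \/ w = (k, k).
Proof.
case/existsP => k /subsetP sk; exists k => w /sk; rewrite !inE.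
by case/orP => [->|/eqP ->]; [left|right].
Qed.

Lemma face_intro (t : {set V}) (k : 'I_q) :
  (forall w, w \in t -> (w.1 < w.2)%N \/ w = (k, k)) -> face t.
Proof.
move=> h; apply/existsP; exists k; apply/subsetP => w /h.
by rewrite !inE => -[->|->]; rewrite ?eqxx ?orbT.
Qed.

Lemma lab_pair (a b : 'I_q) (m : 'X_{1..nvars q}) :
  (lab (a, a) <= m)%MM -> (lab (b, b) <= m)%MM -> (lab (a, b) <= m)%MM.
Proof.
move=> /mnm_lepP ha /mnm_lepP hb; apply/mnm_lepP => i.
move: (ha i) (hb i); rewrite /Mq2_lab !mnmE /=; lia.
Qed.

Lemma hcone_Mq m (t : {set V}) : face t -> t != set0 -> (L t <= m)%MM ->
  exists u, (lab u <= m)%MM /\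
    forall t', face t' -> (L t' <= m)%MM -> face (u |: t').
Proof.
move=> ft /set0Pn [v vt] lt.
have lv := elimT (L_leP _ _ _) lt v vt.
case: (boolP [exists w : V, (w.1 < w.2)%N && (lab w <= m)%MM]).
  case/existsP => w /andP[wM lw]; exists w; split => // t' ft' _.
  have [k hk] := faceE ft'; apply: (face_intro (k := k)) => x.
  by rewrite in_setU1 => /predU1P [->|/hk //]; left.
move=> none.
have noM : forall x, (lab x <= m)%MM -> ~~ (x.1 < x.2)%N.
  by move=> x lx; apply: contra none => h; apply/existsP; exists x; rewrite h lx.
have [k hk] := faceE ft.
have vk : v = (k, k) by case: (hk v vt) => // h; move: (noM v lv); rewrite h.
exists v; split => // t' ft' lt'.
have [k' hk'] := faceE ft'; apply: (face_intro (k := k)) => x.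
rewrite in_setU1 => /predU1P [->|xt]; first by right.
have lx := elimT (L_leP _ _ _) lt' x xt.
case: (hk' x xt) => [h|xk]; first by move: (noM x lx); rewrite h.
right; rewrite xk; case: (eqVneq k' k) => [->//|kk].
have lk : (lab (k, k) <= m)%MM by rewrite -vk.
have lk' : (lab (k', k') <= m)%MM by rewrite -xk.
case: (ltngtP k k') => h.
- by move: (noM _ (lab_pair lk lk')); rewrite /= h.
- by move: (noM _ (lab_pair lk' lk)); rewrite /= h.
- by move: kk; rewrite (val_inj h) eqxx.
Qed.



Lemma perm_top (k : 'I_q) : exists s : {perm 'I_q}, (s k : nat) = q.-1.
Proof.
have h : (q.-1 < q)%N by case: k => k' /=; lia.
by exists (tperm k (Ordinal h)); rewrite tpermL.
Qed.

Lemma perm_top2 (x y : 'I_q) : x != y ->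
  exists s : {perm 'I_q}, (s y : nat) = q.-1 /\ (s x : nat) = q.-2.
Proof.
move=> xy.
have q2 : (1 < q)%N.
  case: x y xy => [x hx] [y hy] /= xy.
  have : x != y by apply: contra xy => /eqP e; apply/eqP/val_inj.
  lia.
have htop : (q.-1 < q)%N by lia.
have hsec : (q.-2 < q)%N by lia.
pose top := Ordinal htop; pose sec := Ordinal hsec.
pose ty := tperm y top.
exists (ty * tperm (ty x) sec)%g; rewrite !permM tpermL; split; last by rewrite tpermL.
rewrite tpermD //.
  by apply: contra xy => /eqP e; apply/eqP/(@perm_inj _ ty); rewrite e /ty tpermL.
by apply/eqP => /(congr1 val) /=; lia.
Qed.

Lemma perm_vals (s : {perm 'I_q}) (a b : 'I_q) : a != b -> (s a : nat) != s b.
Proof. by move=> ab; apply: contra ab => /eqP/val_inj/perm_inj ->. Qed.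

Lemma pair_neq (w v : V) : w != v -> ((w.1 : nat) != v.1) || ((w.2 : nat) != v.2).
Proof.
apply: contraR; rewrite negb_or !negbK => /andP[/eqP/val_inj e1 /eqP/val_inj e2].
by rewrite (surjective_pairing w) (surjective_pairing v) e1 e2.
Qed.

Lemma ltn_neqo (a b : 'I_q) : (a < b)%N -> a != b.
Proof. by move=> h; apply/eqP => e; move: h; rewrite e ltnn. Qed.

Lemma hmin_Mq (t : {set V}) (v : V) : face t -> v \in t -> L (t :\ v) != L t.
Proof.
move=> ft vt; have [k hk] := faceE ft.
suff [s hs] : exists s : {perm 'I_q}, forall w, w \in t -> w != v ->
    (lab w (enum_rank s) < lab v (enum_rank s))%N.
  apply/negP => /eqP/mnmP/(_ (enum_rank s)); rewrite !mnmE => E.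
  have h1 : (lab v (enum_rank s) <= \max_(w in t) lab w (enum_rank s))%N.
    exact: (leq_bigmax_cond (F := fun w => lab w (enum_rank s))).
  have h2 : (\max_(w in t :\ v) lab w (enum_rank s) <= (lab v (enum_rank s)).-1)%N.
    apply/bigmax_leqP => w; rewrite !inE => /andP[wv wt].
    have := hs w wt wv; rewrite (labE v).
    move: (lab w (enum_rank s)) ((s v.1).+1 + (s v.2).+1)%N => a b; lia.
  move: h1 h2; rewrite -E labE.
  move: (\max_(w in t :\ v) lab w (enum_rank s)) (s v.1 : nat) (s v.2 : nat) => M x y; lia.
have ltq := fun (s : {perm 'I_q}) (z : 'I_q) => ltn_ord (s z).
case: (hk v vt) => [vM|vk].
- pose i := v.1; pose j := v.2.
  pose x := if j == k then j else i; pose y := if j == k then i else j.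
  have ij : i != j by rewrite neq_ltn vM.
  have xy : x != y by rewrite /x /y; case: ifP => _; rewrite // eq_sym.
  have ky : k != y by rewrite /y; case: (eqVneq j k) => [<-|jk]; rewrite eq_sym.
  have xyij : ((x : nat) = i /\ (y : nat) = j) \/ ((x : nat) = j /\ (y : nat) = i).
    by rewrite /x /y; case: ifP; [right|left].
  have [s [sy sx]] := perm_top2 xy.
  exists s => w wt wv.
  have sk : (s k : nat) != q.-1 by rewrite -sy perm_vals.
  have vxy : ((s v.1 : nat) + s v.2 = q.-2 + q.-1)%N.
    by rewrite -sx -sy /x /y; case: ifP => _; rewrite // addnC.
  rewrite !labE.
  case: (hk w wt) => [wM|->]; last first.
    move: (ltq s k) vxy sk => /=.
    move: (s k : nat) (s v.1 : nat) (s v.2 : nat) => a b c; lia.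
  have wab := perm_vals s (a := w.1) (b := w.2) (ltn_neqo wM).
  have ha : (s w.1 : nat) = q.-1 -> (w.1 : nat) = y.
    by rewrite -sy => /val_inj/perm_inj ->.
  have hb : (s w.2 : nat) = q.-1 -> (w.2 : nat) = y.
    by rewrite -sy => /val_inj/perm_inj ->.
  have ha' : (s w.1 : nat) = q.-2 -> (w.1 : nat) = x.
    by rewrite -sx => /val_inj/perm_inj ->.
  have hb' : (s w.2 : nat) = q.-2 -> (w.2 : nat) = x.
    by rewrite -sx => /val_inj/perm_inj ->.
  have wv' := pair_neq wv.
  move: (ltq s w.1) (ltq s w.2) vM wM wab vxy xyij ha hb ha' hb' wv'.
  rewrite -/i -/j.
  move: (s w.1 : nat) (s w.2 : nat) (s i : nat) (s j : nat) => a b c d.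
  move: (w.1 : nat) (w.2 : nat) (x : nat) (y : nat) (i : nat) (j : nat) => a' b' c' d' e' f'.
  move=> ha0 hb0 hv hw hab hcd hxy h1 h2 h3 h4 hne.
  case: (ltnP (a + b) (q.-2 + q.-1)) => hlt.
    by clear -hlt hcd; lia.
  have [[ea eb]|[ea eb]] : (a = q.-1 /\ b = q.-2) \/ (a = q.-2 /\ b = q.-1).
    by clear -ha0 hb0 hab hlt; lia.
  - move: (h1 ea) (h4 eb) => {h1 h2 h3 h4} e1 e2.
    by case: hxy => -[e3 e4]; clear -e1 e2 e3 e4 hv hw hne; lia.
  - move: (h3 ea) (h2 eb) => {h1 h2 h3 h4} e1 e2.
    by case: hxy => -[e3 e4]; clear -e1 e2 e3 e4 hv hw hne; lia.
- have [s sk] := perm_top k.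
  exists s => w wt wv.
  rewrite !labE vk /= sk.
  case: (hk w wt) => [wM|wk]; last by move: wv; rewrite wk vk eqxx.
  have wab := perm_vals s (a := w.1) (b := w.2) (ltn_neqo wM).
  move: (ltq s w.1) (ltq s w.2) wab.
  move: (s w.1 : nat) (s w.2 : nat) => a b; lia.
Qed.

End Mq.

Section Aug.
Variables (K : fieldType) (q : nat).
Local Notation V := ('I_q * 'I_q)%type.
Local Notation face := (@Mq2_face q).
Local Notation lab := (@Mq2_lab q).
Local Notation R := {mpoly K[nvars q]}.
Local Notation Aug := (@bps_augm_image K (nvars q) _ face lab).
Local Notation I := (@perm_ideal K q).

Lemma im_add (A B : R -> Prop) p1 p2 :
  ideal_mul A B p1 -> ideal_mul A B p2 -> ideal_mul A B (p1 + p2).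
Proof.
move=> [s1 [h1 ->]] [s2 [h2 ->]]; exists (s1 ++ s2); split; last by rewrite big_cat.
by move=> ab; rewrite mem_cat => /orP[/h1|/h2].
Qed.

Lemma im_0 (A B : R -> Prop) : ideal_mul A B 0.
Proof. by exists [::]; split => //; rewrite big_nil. Qed.

Lemma im_prod (A B : R -> Prop) a b : A a -> B b -> ideal_mul A B (a * b).
Proof.
move=> ha hb; exists [:: (a, b)]; split; last by rewrite big_seq1.
by move=> ab; rewrite inE => /eqP ->.
Qed.

Lemma I_tau (r : R) (i : 'I_q) : I (r * tau K i).
Proof.
exists (fun j => if j == i then r else 0).
rewrite (bigD1 i) //= eqxx big1 ?addr0 // => j /negbTE ->; by rewrite mul0r.
Qed.

Lemma XlabE (v : V) : 'X_[lab v] = tau K v.1 * tau K v.2 :> R.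
Proof. by rewrite /Mq2_lab mpolyXD. Qed.

Lemma Aug_iff p : Aug p <-> exists c : chain K (nvars q) V, supported face 1 c /\
  p = \sum_(v | face [set v]) 'X_[lab v] * c [set v].
Proof.
split => -[c [sc e]]; exists c; split => //.
  by rewrite -e diff_set0.
by rewrite e diff_set0.
Qed.

Lemma Aug0 : Aug 0.
Proof.
apply/Aug_iff; exists 0; split; first by move=> t; rewrite ffunE eqxx.
by rewrite big1 // => v _; rewrite ffunE mulr0.
Qed.

Lemma AugD p1 p2 : Aug p1 -> Aug p2 -> Aug (p1 + p2).
Proof.
move=> /Aug_iff [c1 [s1 ->]] /Aug_iff [c2 [s2 ->]].
apply/Aug_iff; exists [ffun t => c1 t + c2 t]; split.
  move=> t; rewrite ffunE; case: (eqVneq (c1 t) 0) => [->|nz]; last by move=> _; exact: s1.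
  by rewrite add0r; exact: s2.
by rewrite -big_split /=; apply: eq_bigr => v _; rewrite ffunE mulrDr.
Qed.

Lemma Aug_gen (r : R) (i j : 'I_q) : Aug (r * (tau K i * tau K j)).
Proof.
pose w : V := if (i <= j)%N then (i, j) else (j, i).
have fw : face [set w].
  apply: (face_intro (k := i)) => x; rewrite inE => /eqP ->; rewrite /w.
  case: (ltngtP i j) => h /=; [by left|by left|right].
  by rewrite (val_inj h).
have Xw : 'X_[lab w] = tau K i * tau K j.
  by rewrite XlabE /w; case: ifP => _ //=; rewrite mulrC.
apply/Aug_iff; exists [ffun t => if t == [set w] then r else 0]; split.
  move=> t; rewrite ffunE; case: (eqVneq t [set w]) => [->|_]; last by rewrite eqxx.
  by move=> _; rewrite cards1.
rewrite (bigD1 w) //= big1 ?addr0 => [|v /andP[_ vw]].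
  by rewrite ffunE eqxx Xw mulrC.
by rewrite ffunE (inj_eq set1_inj) (negbTE vw) mulr0.
Qed.

Lemma aug_equiv p : Aug p <-> ideal_mul I I p.
Proof.
split.
  move=> /Aug_iff [c [_ ->]]; apply: big_ind => //; first exact: im_0.
    by move=> ? ?; apply: im_add.
  move=> v _; rewrite XlabE mulrC mulrA; apply: im_prod; first exact: I_tau.
  by rewrite -[tau K v.2]mul1r; apply: I_tau.
move=> [s [hs ->]]; rewrite big_seq; apply: big_ind => //; first exact: Aug0.
  by move=> ? ?; apply: AugD.
move=> ab /hs [[c1 ->] [c2 ->]]; rewrite big_distrl /=; apply: big_ind => //.
- exact: Aug0.
- by move=> ? ?; apply: AugD.
move=> i _; rewrite big_distrr /=; apply: big_ind => //.
- exact: Aug0.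
- by move=> ? ?; apply: AugD.
by move=> j _; rewrite mulrACA; apply: Aug_gen.
Qed.

End Aug.

Theorem corollary4p9 (K : fieldType) (q : nat) (hq : (0 < q)%N) :
  @bps_exact K (nvars q) _ (@Mq2_face q) (@Mq2_lab q) /\
  @bps_minimal K (nvars q) _ (@Mq2_face q) (@Mq2_lab q) /\
  (forall p : {mpoly K[nvars q]},
     @bps_augm_image K (nvars q) _ (@Mq2_face q) (@Mq2_lab q) p <->
     ideal_mul (@perm_ideal K q) (@perm_ideal K q) p).
Proof.
split; first by apply: exact_gen => m t; exact: hcone_Mq.
split; first by apply: minimal_gen => t v; exact: hmin_Mq.
exact: aug_equiv.
Qed.
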